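(* Let $q=|q|e^{i\varphi}$, where $|q|\in L^\infty(\mathbb{R})$ never vanishes and $\varphi:\mathbb{R}\to\mathbb{R}$ is locally absolutely continuous with $\partial_x\varphi\in L^\infty(\mathbb{R};\mathbb{R})$. Let $L=\begin{pmatrix} i\partial_x & -iq\\ i\bar q & -i\partial_x\end{pmatrix}:H^1(\mathbb{R};\mathbb{C}^2)\to L^2(\mathbb{R};\mathbb{C}^2)$. Then every eigenvalue $\lambda\in\mathbb{R}$ of $L$ satisfies, for all $c\in\mathbb{R}$, $$c-\lambda\le \Big\|\Big(\tfrac12\partial_x\varphi-|q|+c\Big)^{(+)}\Big\|_{L^\infty}\quad\text{or}\quad c+\lambda\le \Big\|\Big(\tfrac12\partial_x\varphi+|q|-c\Big)^{(-)}\Big\|_{L^\infty}.$$ In particular, if $|q|\ge c+\frac12|\partial_x\varphi|$ pointwise for some $c>0$, then $L$ has no eigenvalues in $(-c,c)$.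
   Context: For a real function $f$, $f^{(+)}=\max\{f,0\}$ and $f^{(-)}=\max\{-f,0\}$ denote its positive and negative parts. *)

(* Defs.v *)
From HB Require Import structures.
From mathcomp Require Import all_boot all_order all_algebra.
From mathcomp Require Import all_classical all_reals all_analysis.
From mathcomp Require Import complex.
Set Implicit Arguments. Unset Strict Implicit. Unset Printing Implicit Defensive.
Import Order.TTheory GRing.Theory Num.Theory.
Import numFieldNormedType.Exports.
Local Open Scope classical_set_scope.
Local Open Scope ring_scope.

Section Defs.
Context {R : realType}.
Local Notation leb := (@lebesgue_measure R).

Definition abs_cont_on (f : R -> R) (a b : R) : Prop :=
  forall eps : R, 0 < eps -> exists2 delta : R, 0 < delta &
    forall (n : nat) (s t : 'I_n -> R),
      (forall k, a <= s k /\ s k <= t k /\ t k <= b) ->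
      (forall k l, k != l -> t k <= s l \/ t l <= s k) ->
      \sum_(k < n) (t k - s k) < delta ->
      \sum_(k < n) `|f (t k) - f (s k)| < eps.

Definition loc_abs_cont (f : R -> R) : Prop :=
  forall a b : R, a <= b -> abs_cont_on f a b.

Definition ae_deriv (f g : R -> R) : Prop :=
  {ae leb, forall x, derivable f x 1 /\ derive1 f x = g x}.

Definition L2 (f : R -> R) : Prop :=
  measurable_fun setT f /\ (\int[leb]_x ((f x) ^+ 2)%:E < +oo)%E.

Definition Linf (f : R -> R) : Prop :=
  measurable_fun setT f /\ ('N[leb]_(+oo%E)[EFin \o f] < +oo)%E.

Definition cloc_abs_cont (u : R -> R[i]) : Prop :=
  loc_abs_cont (fun x => complex.Re (u x)) /\ loc_abs_cont (fun x => complex.Im (u x)).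
Definition cae_deriv (u du : R -> R[i]) : Prop :=
  ae_deriv (fun x => complex.Re (u x)) (fun x => complex.Re (du x)) /\
  ae_deriv (fun x => complex.Im (u x)) (fun x => complex.Im (du x)).
Definition cL2 (u : R -> R[i]) : Prop :=
  L2 (fun x => complex.Re (u x)) /\ L2 (fun x => complex.Im (u x)).

(* u in H^1(R;C) with (weak = a.e. classical) derivative du:
   u is the locally absolutely continuous representative, u, u' in L^2 *)
Definition H1c (u du : R -> R[i]) : Prop :=
  [/\ cloc_abs_cont u, cae_deriv u du, cL2 u & cL2 du].

Definition is_eigenvalue_L (q : R -> R[i]) (lam : R) : Prop :=
  exists u1 u2 du1 du2 : R -> R[i],
    [/\ H1c u1 du1, H1c u2 du2,
        ~ {ae leb, forall x, u1 x = 0 /\ u2 x = 0} &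
        {ae leb, forall x,
           (Complex 0 1) * du1 x - (Complex 0 1) * q x * u2 x = (lam%:C)%C * u1 x /\
           (Complex 0 1) * conjc (q x) * u1 x - (Complex 0 1) * du2 x = (lam%:C)%C * u2 x}].

End Defs.

Notation cabs := ComplexField.Normc.normc.

(* Main.v *)
Require Import Defs.
From HB Require Import structures.
From mathcomp Require Import all_boot all_order all_algebra.
From mathcomp Require Import all_classical all_reals all_analysis.
From mathcomp Require Import complex.
From mathcomp Require Import ring lra measurable_realfun.
Import Order.TTheory GRing.Theory Num.Theory.
Import numFieldNormedType.Exports.
Local Open Scope classical_set_scope.
Local Open Scope ring_scope.

Section S.
Context {R : realType}.
Local Notation mu := (@lebesgue_measure R).

Lemma deriv_gauge (f : R -> R) x eta : 0 < eta -> derivable f x 1 ->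
  exists2 d, 0 < d & forall y, `|y - x| < d ->
     `|f y - f x - (f^`())%classic x * (y - x)| <= eta * `|y - x|.
Proof.
move=> eta0 df.
have H : (fun h : R => h^-1 *: ((f \o shift x) (h *: 1) - f x)) @ 0^' --> (f^`())%classic x.
  by rewrite derive1E; exact: df.
move/cvgrPdist_le : H => /(_ eta eta0).
rewrite /= near_withinE => /nbhs_ballP[d /= d0 Hd].
exists d => // y yx.
have [->|yx0] := eqVneq y x; first by rewrite !subrr mulr0 normr0 subr0 normr0 mulr0.
have := Hd (y - x); rewrite /ball /= sub0r normrN => /(_ yx).
rewrite subr_eq0 => /(_ yx0).
rewrite /GRing.scale /= mulr1 subrK => H.
have yx0' : y - x != 0 by rewrite subr_eq0.
have -> : f y - f x - (f^`())%classic x * (y - x) =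
   - (((f^`())%classic x - (y - x)^-1 * (f y - f x)) * (y - x)).
  by field.
by rewrite normrN normrM ler_wpM2r.
Qed.

Lemma measure_Ioc_add (U : set R) (a t0 t : R) : open U -> a <= t0 -> t0 <= t ->
  `]t0, t] `<=` U ->
  mu (U `&` `]a, t]) = (mu (U `&` `]a, t0]) + (t - t0)%:E)%E.
Proof.
move=> oU at0 t0t sU.
have mU : measurable U by exact: open_measurable.
have -> : U `&` `]a, t] = (U `&` `]a, t0]) `|` `]t0, t].
  apply/seteqP; split => x /=.
    rewrite !in_itv /= => -[Ux /andP[ax xt]].
    have [xt0|xt0] := leP x t0; first by left; split => //; apply/andP.
    by right; apply/andP.
  rewrite !in_itv /= => -[[Ux /andP[ax xt0]]|/andP[t0x xt]].
    by split => //; rewrite ax (le_trans xt0 t0t).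
  split; first by apply: sU; rewrite /= in_itv /= t0x xt.
  by rewrite (le_lt_trans at0 t0x) xt.
rewrite measureU //.
- congr (_ + _)%E; apply: eq_trans; first exact: (lebesgue_measure_itv `]t0, t]).
  rewrite /= lte_fin.
  case: ltP => [_|]; first by rewrite EFinB.
  move=> tt0; have -> : t = t0 by apply/eqP; rewrite eq_le t0t tt0.
  by rewrite subrr.
- exact: measurableI.
- apply/seteqP; split => // x /= [[_]]; rewrite !in_itv /= => /andP[_ xt0] /andP[t0x _].
  by move: (lt_le_trans t0x xt0); rewrite ltxx.
Qed.


Lemma ac_mono_aux {f : R -> R} {a b : R} : a <= b -> abs_cont_on f a b ->
  {ae mu, forall x, derivable f x 1 /\ 0 <= (f^`())%classic x} ->
  forall eps eta, 0 < eps -> 0 < eta -> f a - eta * (b - a) - eps <= f b.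
Proof.
move=> ab acf aef eps eta eps0 eta0.
have [delta delta0 Hac] := acf eps eps0.
set N := ~` [set x | derivable f x 1 /\ 0 <= (f^`())%classic x].
have N0 : ((wlength idfun)^*%mu N = 0)%E by apply/negligible_outer_measure; exact: aef.
have delta20 : 0 < delta / 2 by rewrite divr_gt0.
have [U [oU NU muU]] := outer_measure_open_le N delta20.
rewrite N0 add0e in muU.
have mU : measurable U by exact: open_measurable.
pose P t := exists n (s e : nat -> R), [/\ forall k, (k < n)%N -> a <= s k /\ s k <= e k /\ e k <= t,
  forall k l, (k < n)%N -> (l < n)%N -> k != l -> e k <= s l \/ e l <= s k,
  ((\sum_(k < n) (e k - s k))%:E <= mu (U `&` `]a, t]))%E &
  f a - eta * (t - a) - \sum_(k < n) `|f (e k) - f (s k)| <= f t].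
have step : forall t0 t, a <= t0 -> t0 <= t -> P t0 ->
   (f t0 - eta * (t - t0) <= f t) \/ (`]t0, t] `<=` U) -> P t.
  move=> t0 t at0 t0t [n [s [e [Hb Hno Hm Hf]]]] [H|H].
    exists n, s, e; split => //.
    - move=> k kn; have [? [? ?]] := Hb k kn; split => //; split => //.
      exact: le_trans t0t.
    - apply: (le_trans Hm); apply: le_measure; rewrite ?inE.
      + exact: measurableI.
      + exact: measurableI.
      + move=> x /= [Ux]; rewrite !in_itv /= => /andP[ax xt0]; split => //.
        by rewrite ax (le_trans xt0 t0t).
    - have : eta * (t0 - a) + eta * (t - t0) = eta * (t - a) by ring.
      lra.
  exists n.+1, (fun k => if k == n then t0 else s k), (fun k => if k == n then t else e k).
  split.
  - move=> k; rewrite ltnS leq_eqVlt => /orP[/eqP ->|kn]; first by rewrite eqxx.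
    rewrite ltn_eqF //; have [? [? ?]] := Hb k kn; split => //; split => //.
    by apply: le_trans t0t; case: (Hb k kn) => _ [].
  - move=> k l kn1 ln1 kl.
    have [kn|kn] := eqVneq k n; have [ln|ln] := eqVneq l n.
    + by move: kl; rewrite kn ln eqxx.
    + have ln' : (l < n)%N by rewrite ltn_neqAle ln -ltnS.
      by right; case: (Hb l ln') => _ [].
    + have kn' : (k < n)%N by rewrite ltn_neqAle kn -ltnS.
      by left; case: (Hb k kn') => _ [].
    + have ln' : (l < n)%N by rewrite ltn_neqAle ln -ltnS.
      have kn' : (k < n)%N by rewrite ltn_neqAle kn -ltnS.
      exact: Hno.
  - rewrite big_ord_recr /= eqxx.
    rewrite (eq_bigr (fun k : 'I_n => e k - s k)); last first.
      by move=> k _; rewrite ltn_eqF.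
    rewrite (@measure_Ioc_add U a t0 t oU at0 t0t H) EFinD.
    by apply: leeD.
  - rewrite big_ord_recr /= eqxx.
    rewrite (eq_bigr (fun k : 'I_n => `|f (e k) - f (s k)|)); last first.
      by move=> k _; rewrite ltn_eqF.
    have h1 : f t0 - `|f t - f t0| <= f t.
      by have := ler_norm (f t0 - f t); rewrite distrC; lra.
    have h2 : eta * (t0 - a) <= eta * (t - a) by rewrite ler_pM2l //; lra.
    lra.
pose S := [set t | a <= t <= b /\ P t].
have Pa : P a.
  exists 0%N, (fun=> 0), (fun=> 0); split => //.
  - by rewrite big_ord0; exact: measure_ge0.
  - by rewrite big_ord0 subrr mulr0 !subr0.
have S0 : S !=set0 by exists a; split => //; rewrite lexx ab.
have ubS : ubound S b by move=> t [/andP[_ ?] _].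
have Sub : has_ubound S by exists b.
have hS : has_sup S by split.
set s := sup S.
have as_ : a <= s by apply: ub_le_sup => //; split => //; rewrite lexx ab.
have sb : s <= b by exact: ge_sup.
have [d d0 Hd] : exists2 d, 0 < d & forall t0 t, s - d < t0 -> t0 <= s -> s <= t ->
    t < s + d -> (f t0 - eta * (t - t0) <= f t) \/ (`]t0, t] `<=` U).
  case: (pselect (derivable f s 1 /\ 0 <= (f^`())%classic s)) => [[ds fs0]|Ns].
    have [d d0 Hd] := deriv_gauge f s eta eta0 ds.
    exists d => // t0 t st0 t0s st tsd; left.
    have e1 : `|t0 - s| = s - t0 by rewrite distrC ger0_norm // subr_ge0.
    have e2 : `|t - s| = t - s by rewrite ger0_norm // subr_ge0.
    have h1 := Hd t0; rewrite e1 in h1; have {}h1 := h1 ltac:(lra).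
    have h2 := Hd t; rewrite e2 in h2; have {}h2 := h2 ltac:(lra).
    rewrite ler_norml in h1; rewrite ler_norml in h2.
    case/andP: h1 => _ h1; case/andP: h2 => h2 _.
    have p1 : 0 <= (f^`())%classic s * (t - s) by apply: mulr_ge0 => //; lra.
    have p2 : (f^`())%classic s * (t0 - s) <= 0 by apply: mulr_ge0_le0 => //; lra.
    have : eta * (s - t0) + eta * (t - s) = eta * (t - t0) by ring.
    lra.
  have Us : U s by apply: NU.
  have : nbhs s U by apply: open_nbhs_nbhs.
  move=> /nbhs_ballP[d /= d0 Hd].
  exists d => // t0 t st0 t0s st tsd; right => x /=; rewrite in_itv /= => /andP[t0x xt].
  apply: Hd; rewrite /ball /= ltr_norml; apply/andP; split; lra.
have [t0 St0 t0s] := sup_adherent d0 hS.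
have t0s' : t0 <= s by apply: ub_le_sup.
case: St0 => /andP[at0 t0b] Pt0.
have Ps : P s.
  by apply: (step t0) => //; apply: Hd => //; lra.
have sb' : s = b.
  apply/eqP; rewrite eq_le sb /=; rewrite leNgt; apply/negP => sb2.
  pose t := Num.min b (s + d / 2).
  have st : s < t by rewrite /t lt_min sb2 /=; rewrite ltrDl divr_gt0.
  have tb : t <= b by rewrite /t ge_min lexx.
  have tsd : t < s + d by rewrite /t gt_min; apply/orP; right; rewrite ltrD2l; lra.
  have Pt : P t by apply: (step t0) => //; [lra | apply: Hd => //; lra].
  have : t <= s by apply: ub_le_sup => //; split => //; apply/andP; split => //; lra.
  lra.
rewrite sb' in Ps.
case: Ps => n [s' [e [Hb Hno Hm Hf]]].
have Hsum : \sum_(k < n) (e k - s' k) < delta.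
  have : ((\sum_(k < n) (e k - s' k))%:E <= (delta / 2)%:E)%E.
    apply: (le_trans Hm); apply: le_trans muU; apply: le_measure; rewrite ?inE //.
    exact: measurableI.
  by rewrite lee_fin => h; lra.
have := Hac n (fun k : 'I_n => s' k) (fun k : 'I_n => e k).
move=> /(_ (fun k => Hb k (ltn_ord k))).
move=> /(_ (fun k l kl => Hno k l (ltn_ord k) (ltn_ord l) kl)).
move=> /(_ Hsum) => h.
lra.
Qed.

Lemma ac_mono {f : R -> R} {a b : R} : a <= b -> abs_cont_on f a b ->
  {ae mu, forall x, derivable f x 1 /\ 0 <= (f^`())%classic x} -> f a <= f b.
Proof.
move=> ab acf aef; apply/ler_addgt0Pr => e e0.
have ba1 : 0 < b - a + 1 by lra.
have e20 : 0 < e / 2 by rewrite divr_gt0.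
have := ac_mono_aux ab acf aef (e / 2) (e / 2 / (b - a + 1)) e20 (divr_gt0 e20 ba1).
have h : (b - a) / (b - a + 1) <= 1 by rewrite ler_pdivrMr // mul1r; lra.
have -> : e / 2 / (b - a + 1) * (b - a) = e / 2 * ((b - a) / (b - a + 1)).
  by rewrite mulrAC -!mulrA.
have : e / 2 * ((b - a) / (b - a + 1)) <= e / 2 * 1 by rewrite ler_pM2l.
lra.
Qed.

Lemma lip1 (g dg : R -> R) : (forall x : R, is_derive x (1:R) g (dg x)) ->
  (forall x, `|dg x| <= 1) -> forall x y, `|g x - g y| <= `|x - y|.
Proof.
move=> gd dg1.
suff H : forall x y, x < y -> `|g x - g y| <= `|x - y|.
  move=> x y; have [xy|yx|->] := ltgtP x y; first exact: H.
    by rewrite distrC (distrC x); exact: H.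
  by rewrite !subrr normr0.
move=> x y xy.
have [c _ hc] := @MVT R g dg x y xy (fun z _ => gd z)
  (derivable_within_continuous (fun z _ => @ex_derive _ _ _ _ _ _ _ (gd z))).
rewrite distrC hc normrM (distrC x).
by rewrite -[leRHS]mul1r ler_wpM2r.
Qed.

Lemma lip_cos (x y : R) : `|cos x - cos y| <= `|x - y|.
Proof.
apply: (@lip1 cos (fun z => - sin z)).
by move=> z; rewrite normrN sin_max.
Qed.

Lemma lip_sin (x y : R) : `|sin x - sin y| <= `|x - y|.
Proof.
apply: (@lip1 sin cos).
by move=> z; rewrite cos_max.
Qed.

Lemma ac_step {f : R -> R} {a b : R} : abs_cont_on f a b -> exists2 d, 0 < d &
  forall s t, a <= s -> s <= t -> t <= b -> t - s < d -> `|f t - f s| < 1.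
Proof.
move=> acf; have [d d0 H] := acf 1 ltr01; exists d => // s t as_ st tb tsd.
have := H 1%N (fun=> s) (fun=> t).
rewrite !big_ord1 => /(_ _ _ tsd); apply => //.
by move=> k l; rewrite !ord1 eqxx.
Qed.

Lemma ac_bounded {f : R -> R} {a b : R} : a <= b -> abs_cont_on f a b ->
  exists M, 0 <= M /\ forall x, a <= x <= b -> `|f x| <= M.
Proof.
move=> ab acf; have [d d0 H] := ac_step acf.
have d20 : 0 < d / 2 by rewrite divr_gt0.
have ind : forall k : nat, forall x, a <= x <= b -> x <= a + k%:R * (d / 2) ->
    `|f x - f a| <= k%:R.
  elim => [|k IH] x /andP[ax xb].
    rewrite mul0r addr0 => xa.
    have -> : x = a by apply/eqP; rewrite eq_le xa ax.
    by rewrite subrr normr0.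
  move=> xk.
  have [xk'|xk'] := leP x (a + k%:R * (d / 2)).
    by apply: (le_trans (IH x _ xk')); [rewrite ax xb | rewrite ler_nat].
  have h0 : 0 <= k%:R * (d / 2) :> R by rewrite mulr_ge0 // ltW.
  have h1 := H (a + k%:R * (d / 2)) x ltac:(lra) (ltW xk') xb.
  have h2 := IH (a + k%:R * (d / 2)) ltac:(apply/andP; split; lra) (lexx _).
  have e : x - a = (x - (a + k%:R * (d / 2))) + ((a + k%:R * (d / 2)) - a) by ring.
  move: xk; rewrite -natr1 mulrDl mul1r => xk.
  have {}h1 : `|f x - f (a + k%:R * (d / 2))| < 1 by apply: h1; lra.
  have := ler_normD (f x - f (a + k%:R * (d / 2))) (f (a + k%:R * (d / 2)) - f a).
  rewrite addrA subrK => h3.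
  lra.
pose k := (Num.Def.trunc ((b - a) / (d / 2))).+1.
exists (`|f a| + k%:R); split; first by rewrite addr_ge0.
move=> x xab.
have : `|f x - f a| <= k%:R.
  apply: ind => //.
  have := truncnS_gt ((b - a) / (d / 2)); rewrite -/k => hk.
  have : (b - a) <= k%:R * (d / 2).
    by rewrite -ler_pdivrMr //; apply: ltW.
  case/andP: xab => _ ?; lra.
have := ler_normD (f x - f a) (f a); rewrite subrK; lra.
Qed.

End S.

Section S2.
Context {R : realType}.
Local Notation mu := (@lebesgue_measure R).

Lemma ac_add {f g : R -> R} {a b : R} : abs_cont_on f a b -> abs_cont_on g a b ->
  abs_cont_on (fun x => f x + g x) a b.
Proof.
move=> af ag e e0; have e20 : 0 < e / 2 by rewrite divr_gt0.
have [d1 d10 H1] := af _ e20; have [d2 d20 H2] := ag _ e20.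
exists (Num.min d1 d2); first by rewrite lt_min d10 d20.
move=> n s t hb hno; rewrite lt_min => /andP[hs1 hs2].
have := H1 n s t hb hno hs1; have := H2 n s t hb hno hs2.
have : \sum_(k < n) `|f (t k) + g (t k) - (f (s k) + g (s k))| <=
   \sum_(k < n) `|f (t k) - f (s k)| + \sum_(k < n) `|g (t k) - g (s k)|.
  rewrite -big_split; apply: ler_sum => k _ /=.
  by rewrite opprD addrACA; apply: ler_normD.
lra.
Qed.

Lemma ac_opp {f : R -> R} {a b : R} : abs_cont_on f a b ->
  abs_cont_on (fun x => - f x) a b.
Proof.
move=> af e e0; have [d d0 H] := af _ e0; exists d => // n s t hb hno hs.
under eq_bigr => k _ do rewrite -opprD normrN.
exact: H.
Qed.

Lemma ac_lipc {h f : R -> R} {a b : R} : (forall x y, `|h x - h y| <= `|x - y|) ->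
  abs_cont_on f a b -> abs_cont_on (fun x => h (f x)) a b.
Proof.
move=> hl af e e0; have [d d0 H] := af _ e0; exists d => // n s t hb hno hs.
apply: le_lt_trans (H n s t hb hno hs).
by apply: ler_sum => k _; exact: hl.
Qed.

Lemma ac_mul {f g : R -> R} {a b : R} : a <= b -> abs_cont_on f a b -> abs_cont_on g a b ->
  abs_cont_on (fun x => f x * g x) a b.
Proof.
move=> ab af ag e e0.
have [Mf [Mf0 HMf]] := ac_bounded ab af; have [Mg [Mg0 HMg]] := ac_bounded ab ag.
have Mf1 : 0 < Mf + 1 by lra.
have Mg1 : 0 < Mg + 1 by lra.
have e20 : 0 < e / 2 by rewrite divr_gt0.
have [d1 d10 H1] := af _ (divr_gt0 e20 Mg1); have [d2 d20 H2] := ag _ (divr_gt0 e20 Mf1).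
exists (Num.min d1 d2); first by rewrite lt_min d10 d20.
move=> n s t hb hno; rewrite lt_min => /andP[hs1 hs2].
have hf := H1 n s t hb hno hs1; have hg := H2 n s t hb hno hs2.
set A := \sum_(k < n) `|g (t k) - g (s k)| in hg.
set B := \sum_(k < n) `|f (t k) - f (s k)| in hf.
have A0 : 0 <= A by apply: sumr_ge0 => k _.
have B0 : 0 <= B by apply: sumr_ge0 => k _.
have : \sum_(k < n) `|f (t k) * g (t k) - f (s k) * g (s k)| <= Mf * A + Mg * B.
  rewrite /A /B !mulr_sumr -big_split; apply: ler_sum => k _ /=.
  have [as_ [st tb]] := hb k.
  have -> : f (t k) * g (t k) - f (s k) * g (s k) =
    f (t k) * (g (t k) - g (s k)) + g (s k) * (f (t k) - f (s k)) by ring.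
  apply: le_trans (ler_normD _ _) _; rewrite !normrM.
  apply: lerD; apply: ler_wpM2r => //.
    by apply: HMf; apply/andP; split; lra.
  by apply: HMg; apply/andP; split; lra.
have h1 : (Mf + 1) * A < e / 2.
  by rewrite -ltr_pdivlMl // mulrC.
have h2 : (Mg + 1) * B < e / 2.
  by rewrite -ltr_pdivlMl // mulrC.
lra.
Qed.

End S2.

Section A.
Context {R : realType}.

Lemma sq_le_abs (Z W : R) : 0 <= W -> Z ^+ 2 <= W ^+ 2 -> `|Z| <= W.
Proof.
move=> W0 h; rewrite -(ger0_norm W0) -ler_sqr ?nnegrE //.
by rewrite real_normK ?num_real // ger0_norm.
Qed.

Lemma cs_bound (C S a1 b1 a2 b2 : R) : C ^+ 2 + S ^+ 2 = 1 ->
  `|C * (a1 * a2 + b1 * b2) - S * (a1 * b2 - b1 * a2)| <=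
     (a1 ^+ 2 + b1 ^+ 2 + (a2 ^+ 2 + b2 ^+ 2)) / 2 /\
  `|C * (a1 * b2 - b1 * a2) + S * (a1 * a2 + b1 * b2)| <=
     (a1 ^+ 2 + b1 ^+ 2 + (a2 ^+ 2 + b2 ^+ 2)) / 2.
Proof.
move=> cs.
set P := a1 * a2 + b1 * b2; set Q := a1 * b2 - b1 * a2.
set A := a1 ^+ 2 + b1 ^+ 2; set B := a2 ^+ 2 + b2 ^+ 2.
have hL : (C * P - S * Q) ^+ 2 + (C * Q + S * P) ^+ 2 = A * B.
  have -> : A * B = (C ^+ 2 + S ^+ 2) * (P ^+ 2 + Q ^+ 2).
    by rewrite cs mul1r /A /B /P /Q; ring.
  ring.
have AB : A * B <= ((A + B) / 2) ^+ 2.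
  have : 0 <= (A - B) ^+ 2 by exact: sqr_ge0.
  have -> : ((A + B) / 2) ^+ 2 = A * B + (A - B) ^+ 2 / 4 by field.
  move=> h; rewrite lerDl divr_ge0 //.
have A0 : 0 <= A by rewrite addr_ge0 // sqr_ge0.
have B0 : 0 <= B by rewrite addr_ge0 // sqr_ge0.
have W0 : 0 <= (A + B) / 2 by rewrite divr_ge0 // addr_ge0.
have s1 := sqr_ge0 (C * P - S * Q); have s2 := sqr_ge0 (C * Q + S * P).
split; apply: sq_le_abs => //; lra.
Qed.

Lemma key_alg (a1 b1 a2 b2 da1 db1 da2 db2 C S dphi r lam eps : R) :
  C ^+ 2 + S ^+ 2 = 1 -> `|lam + dphi / 2| <= r - eps ->
  da1 = r * (C * a2 - S * b2) + lam * b1 ->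
  db1 = r * (C * b2 + S * a2) - lam * a1 ->
  da2 = r * (C * a1 + S * b1) - lam * b2 ->
  db2 = r * (C * b1 - S * a1) + lam * a2 ->
  eps * (a1 ^+ 2 + b1 ^+ 2 + (a2 ^+ 2 + b2 ^+ 2)) <=
    (C * (da1 * a2 + a1 * da2 + (db1 * b2 + b1 * db2)) + (a1 * a2 + b1 * b2) * (- S * dphi))
    - (S * (da1 * b2 + a1 * db2 - (db1 * a2 + b1 * da2)) + (a1 * b2 - b1 * a2) * (C * dphi)).
Proof.
move=> cs hmu -> -> -> ->.
set P := a1 * a2 + b1 * b2; set Q := a1 * b2 - b1 * a2.
set A := a1 ^+ 2 + b1 ^+ 2 + (a2 ^+ 2 + b2 ^+ 2).
set Y := C * Q + S * P.
set LHS := (X in _ <= X).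
have -> : LHS = r * A * (C ^+ 2 + S ^+ 2) - (2 * lam + dphi) * Y.
  rewrite /LHS /A /Y /P /Q; ring.
rewrite cs mulr1.
have [_ hY] := cs_bound C S a1 b1 a2 b2 cs.
rewrite -/P -/Q -/Y -/A in hY.
have h2 : (2 * lam + dphi) * Y <= `|(2 * lam + dphi) * Y| by exact: ler_norm.
rewrite normrM in h2.
have e2 : `|2 * lam + dphi| = 2 * `|lam + dphi / 2|.
  have -> : 2 * lam + dphi = 2 * (lam + dphi / 2) by field.
  by rewrite normrM ger0_norm.
rewrite e2 in h2.
have m0 : 0 <= `|lam + dphi / 2| by [].
have Y0 : 0 <= `|Y| by [].
have h3 : 2 * `|lam + dphi / 2| * `|Y| <= 2 * (r - eps) * `|Y|.
  by rewrite ler_wpM2r // ler_wpM2l.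
have h4 : 2 * (r - eps) * `|Y| <= 2 * (r - eps) * (A / 2).
  rewrite ler_wpM2l //.
  by rewrite mulr_ge0 //; lra.
have e3 : 2 * (r - eps) * (A / 2) = r * A - eps * A by field.
lra.
Qed.
End A.

Section C.
Context {R : realType}.
Lemma ode1 (r C S lam : R) (u1 u2 du : R[i]) :
  (Complex 0 1) * du - (Complex 0 1) * ((r%:C * (C%:C + (Complex 0 1) * S%:C))%C) * u2 = (lam%:C)%C * u1 ->
  complex.Re du = r * (C * complex.Re u2 - S * complex.Im u2) + lam * complex.Im u1 /\
  complex.Im du = r * (C * complex.Im u2 + S * complex.Re u2) - lam * complex.Re u1.
Proof.
case: u1 => a1 b1; case: u2 => a2 b2; case: du => p p' /=.
move=> h; have h1 := congr1 (@complex.Re R) h; have h2 := congr1 (@complex.Im R) h.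
simpl in h1, h2.
split; lra.
Qed.

Lemma ode2 (r C S lam : R) (u1 u2 du : R[i]) :
  (Complex 0 1) * conjc ((r%:C * (C%:C + (Complex 0 1) * S%:C))%C) * u1 - (Complex 0 1) * du = (lam%:C)%C * u2 ->
  complex.Re du = r * (C * complex.Re u1 + S * complex.Im u1) - lam * complex.Im u2 /\
  complex.Im du = r * (C * complex.Im u1 - S * complex.Re u1) + lam * complex.Re u2.
Proof.
case: u1 => a1 b1; case: u2 => a2 b2; case: du => p p' /=.
move=> h; have h1 := congr1 (@complex.Re R) h; have h2 := congr1 (@complex.Im R) h.
simpl in h1, h2.
split; lra.
Qed.
End C.

Section I.
Context {R : realType}.
Local Notation mu := (@lebesgue_measure R).

Lemma int_inf (h : R -> R) (D : set R) (c : R) : measurable_fun setT h ->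
  (forall x, 0 <= h x) -> (\int[mu]_x (h x)%:E < +oo)%E ->
  measurable D -> mu D = +oo%E -> 0 < c -> (forall y, D y -> c <= h y) -> False.
Proof.
move=> mh h0 hint mD muD c0 Dh.
have mhE : measurable_fun setT (EFin \o h) by apply/measurable_EFinP.
have h1 : (\int[mu]_(x in D) (cst c%:E) x <= \int[mu]_(x in D) (h x)%:E)%E.
  apply: ge0_le_integral => //.
  - by move=> ? _; rewrite lee_fin ltW.
  - exact: measurable_funTS.
rewrite integral_cst // in h1.
rewrite [X in (_ * X)%E](_ : _ = +oo%E) in h1; last exact: muD.
rewrite muleC gt0_mulye ?lte_fin // in h1.
have h2 : (\int[mu]_(x in D) (h x)%:E <= \int[mu]_(x in setT) (h x)%:E)%E.
  apply: ge0_subset_integral => //.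
  by move=> ? _; rewrite lee_fin.
have := lt_le_trans (le_lt_trans h2 hint) h1.
by rewrite ltxx.
Qed.

Lemma mono_int_zero (X h : R -> R) : (forall x y, x <= y -> X x <= X y) ->
  (forall x, `|X x| <= h x) -> measurable_fun setT h ->
  (\int[mu]_x (h x)%:E < +oo)%E -> forall x, X x = 0.
Proof.
move=> mX Xh mh hint x0.
have h0 : forall x, 0 <= h x by move=> x; exact: le_trans (normr_ge0 _) (Xh x).
have [xn|xp|//] := ltgtP (X x0) 0.
- exfalso; apply: (@int_inf h `]-oo, x0] (- X x0)) => //.
  + apply: eq_trans; first exact: (lebesgue_measure_itv `]-oo, x0]).
    by rewrite /= ltNyr.
  + by rewrite oppr_gt0.
  + move=> y /=; rewrite in_itv /= => yx.
    have := mX _ _ yx; have := Xh y; rewrite ler_norml => /andP[h1 _]; lra.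
- exfalso; apply: (@int_inf h `[x0, +oo[ (X x0)) => //.
  + apply: eq_trans; first exact: (lebesgue_measure_itv `[x0, +oo[).
    by rewrite /= ltry.
  + move=> y /=; rewrite in_itv /= andbT => yx.
    have := mX _ _ yx; have := Xh y; rewrite ler_norml => /andP[_ h1]; lra.
Qed.
End I.

Section Core.
Context {R : realType}.
Local Notation mu := (@lebesgue_measure R).

Lemma is_derive_X (a1 b1 a2 b2 ph : R -> R) (z da1 db1 da2 db2 dph : R) :
  is_derive z 1 a1 da1 -> is_derive z 1 b1 db1 -> is_derive z 1 a2 da2 ->
  is_derive z 1 b2 db2 -> is_derive z 1 ph dph ->
  is_derive z 1 ((cos \o ph) * (a1 * a2 + b1 * b2) - (sin \o ph) * (a1 * b2 - b1 * a2))
   ((cos (ph z) * (da1 * a2 z + a1 z * da2 + (db1 * b2 z + b1 z * db2)) +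
     (a1 z * a2 z + b1 z * b2 z) * (- sin (ph z) * dph))
    - (sin (ph z) * (da1 * b2 z + a1 z * db2 - (db1 * a2 z + b1 z * da2)) +
     (a1 z * b2 z - b1 z * a2 z) * (cos (ph z) * dph))).
Proof.
move=> h1 h2 h3 h4 h5.
have hc := is_derive1_comp (is_derive_cos (ph z)) h5.
have hs := is_derive1_comp (is_derive_sin (ph z)) h5.
apply: is_derive_eq.
rewrite /GRing.scale /=.
rewrite -[(a1 * a2 + b1 * b2) z]/(a1 z * a2 z + b1 z * b2 z).
rewrite -[(a1 * b2 - b1 * a2) z]/(a1 z * b2 z - b1 z * a2 z).
ring.
Qed.

Lemma L2_int (f : R -> R) : L2 f -> measurable_fun setT (fun x => f x ^+ 2) /\
  (\int[mu]_x (f x ^+ 2)%:E < +oo)%E.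
Proof. by move=> [mf hf]; split => //; exact: measurable_funX. Qed.

Lemma int4 (f1 f2 f3 f4 : R -> R) : L2 f1 -> L2 f2 -> L2 f3 -> L2 f4 ->
  measurable_fun setT (fun x => f1 x ^+ 2 + f2 x ^+ 2 + (f3 x ^+ 2 + f4 x ^+ 2)) /\
  (\int[mu]_x (f1 x ^+ 2 + f2 x ^+ 2 + (f3 x ^+ 2 + f4 x ^+ 2))%:E < +oo)%E.
Proof.
move=> /L2_int[m1 i1] /L2_int[m2 i2] /L2_int[m3 i3] /L2_int[m4 i4].
have mD (g h : R -> R) : measurable_fun setT g -> measurable_fun setT h ->
    measurable_fun setT (fun x => g x + h x).
  by move=> mg mh; exact: measurable_funD.
have iD (g h : R -> R) : measurable_fun setT g -> measurable_fun setT h ->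
    (forall x, 0 <= g x) -> (forall x, 0 <= h x) ->
    (\int[mu]_x (g x)%:E < +oo)%E -> (\int[mu]_x (h x)%:E < +oo)%E ->
    (\int[mu]_x (g x + h x)%:E < +oo)%E.
  move=> mg mh g0 h0 ig ih.
  under eq_integral do rewrite EFinD.
  rewrite ge0_integralD //.
  - exact: lte_add_pinfty.
  - by move=> x _; rewrite lee_fin.
  - exact/measurable_EFinP.
  - by move=> x _; rewrite lee_fin.
  - exact/measurable_EFinP.
have s0 (g : R -> R) x : 0 <= g x ^+ 2 by exact: sqr_ge0.
split; first by apply: (mD); apply: (mD).
apply: (iD); try apply: (mD) => //; try apply: (iD) => //.
- by move=> x; rewrite addr_ge0.
- by move=> x; rewrite addr_ge0.
Qed.

Lemma aeAnd {P Q : R -> Prop} : {ae mu, forall x, P x} -> {ae mu, forall x, Q x} ->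
  {ae mu, forall x, P x /\ Q x}.
Proof.
move=> hP hQ.
exact: (filterS2 (@ae_filter_ringOfSetsType _ _ _ mu) (fun x a b => conj a b) hP hQ).
Qed.

Lemma aeS {P Q : R -> Prop} : {ae mu, forall x, P x} -> (forall x, P x -> Q x) ->
  {ae mu, forall x, Q x}.
Proof.
move=> hP hPQ.
exact: (@filterS _ _ (@ae_filter_ringOfSetsType _ _ _ mu) _ _ hPQ hP).
Qed.

Lemma core (q : R -> R[i]) (phi dphi : R -> R) (lam eps : R) (u1 u2 du1 du2 : R -> R[i]) :
  0 < eps ->
  (forall x, q x = ((cabs (q x))%:C * ((cos (phi x))%:C + (Complex 0 1) * (sin (phi x))%:C))%C) ->
  loc_abs_cont phi -> ae_deriv phi dphi ->
  {ae mu, forall x, `|lam + dphi x / 2| <= cabs (q x) - eps} ->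
  H1c u1 du1 -> H1c u2 du2 ->
  {ae mu, forall x,
           (Complex 0 1) * du1 x - (Complex 0 1) * q x * u2 x = (lam%:C)%C * u1 x /\
           (Complex 0 1) * conjc (q x) * u1 x - (Complex 0 1) * du2 x = (lam%:C)%C * u2 x} ->
  {ae mu, forall x, u1 x = 0 /\ u2 x = 0}.
Proof.
move=> eps0 hq acphi dphiE hmu [[aca1 acb1] [da1E db1E] [L1a L1b] _]
          [[aca2 acb2] [da2E db2E] [L2a L2b] _] hode.
pose a1 := fun x => complex.Re (u1 x); pose b1 := fun x => complex.Im (u1 x).
pose a2 := fun x => complex.Re (u2 x); pose b2 := fun x => complex.Im (u2 x).
pose X := (cos \o phi) * (a1 * a2 + b1 * b2) - (sin \o phi) * (a1 * b2 - b1 * a2).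
pose A := fun z => a1 z ^+ 2 + b1 z ^+ 2 + (a2 z ^+ 2 + b2 z ^+ 2).
have good : {ae mu, forall z, exists dX, is_derive z (1:R) X dX /\ eps * A z <= dX}.
  have G6 := aeAnd (aeAnd (aeAnd (aeAnd da1E db1E) (aeAnd da2E db2E)) (aeAnd hode hmu)) dphiE.
  apply: (aeS G6) => z /= [ [ [ D1 D2 ] [ O hm ] ] [ d5 e5 ] ].
  case: D1 => [ [ d1 e1 ] [ d2 e2 ] ]; case: D2 => [ [ d3 e3 ] [ d4 e4 ] ]; case: O => o1 o2.
  have i1 := derivableP d1; have i2 := derivableP d2; have i3 := derivableP d3.
  have i4 := derivableP d4; have i5 := derivableP d5.
  rewrite -derive1E in i1; rewrite -derive1E in i2; rewrite -derive1E in i3.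
  rewrite -derive1E in i4; rewrite -derive1E in i5.
  rewrite e1 in i1; rewrite e2 in i2; rewrite e3 in i3; rewrite e4 in i4; rewrite e5 in i5.
  eexists; split; first exact: (@is_derive_X a1 b1 a2 b2 phi z _ _ _ _ _ i1 i2 i3 i4 i5).
  rewrite hq in o1 o2.
  have [f1 f2] := ode1 _ _ _ _ _ _ _ o1; have [f3 f4] := ode2 _ _ _ _ _ _ _ o2.
  apply: key_alg; [exact: cos2Dsin2 | exact: hm | exact: f1 | exact: f2 | exact: f3 | exact: f4].
have A0 : forall z, 0 <= A z by move=> z; rewrite /A !addr_ge0 // sqr_ge0.
have XE : forall z, X z = cos (phi z) * (a1 z * a2 z + b1 z * b2 z) -
    sin (phi z) * (a1 z * b2 z - b1 z * a2 z) by [].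
have Xmono : forall x y, x <= y -> X x <= X y.
  move=> x y xy; apply: (ac_mono xy).
  - have acX : abs_cont_on (fun z => cos (phi z) * (a1 z * a2 z + b1 z * b2 z) +
        - (sin (phi z) * (a1 z * b2 z - b1 z * a2 z))) x y.
      apply: ac_add.
        apply: (ac_mul xy); first exact: (ac_lipc lip_cos (acphi _ _ xy)).
        by apply: ac_add; apply: (ac_mul xy); [exact: aca1 | exact: aca2 | exact: acb1 | exact: acb2].
      apply: ac_opp; apply: (ac_mul xy); first exact: (ac_lipc lip_sin (acphi _ _ xy)).
      apply: ac_add; first by apply: (ac_mul xy); [exact: aca1 | exact: acb2].
      by apply: ac_opp; apply: (ac_mul xy); [exact: acb1 | exact: aca2].
    exact: acX.
  - apply: (aeS good) => z [dX [hd hle]]; split.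
      exact: (@ex_derive _ _ _ _ _ _ _ hd).
    rewrite derive1E (@derive_val _ _ _ _ _ _ _ hd).
    exact: le_trans (mulr_ge0 (ltW eps0) (A0 z)) hle.
have [mA iA] := int4 _ _ _ _ L1a L1b L2a L2b.
have X0 : forall z, X z = 0.
  apply: (@mono_int_zero R X A Xmono) => //.
  move=> z; rewrite XE.
  have [h _] := cs_bound (cos (phi z)) (sin (phi z)) (a1 z) (b1 z) (a2 z) (b2 z) (cos2Dsin2 _).
  apply: le_trans h _; rewrite -/(A z); have := A0 z; lra.
apply: (aeS good) => z [dX [hd hle]].
have dX0 : dX = 0.
  rewrite -(@derive_val _ _ _ _ _ _ _ hd).
  rewrite (_ : X = cst 0); first exact: derive_cst.
  by apply/funext => w; rewrite X0.
rewrite dX0 in hle.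
have Az : A z <= 0 by rewrite -(pmulr_rle0 _ eps0).
have s1 := sqr_ge0 (a1 z); have s2 := sqr_ge0 (b1 z).
have s3 := sqr_ge0 (a2 z); have s4 := sqr_ge0 (b2 z).
have z0 : forall w : R, w ^+ 2 = 0 -> w = 0.
  by move=> w /eqP; rewrite expf_eq0 /= => /eqP.
have a1z : a1 z = 0 by apply: z0; rewrite /A in Az; lra.
have b1z : b1 z = 0 by apply: z0; rewrite /A in Az; lra.
have a2z : a2 z = 0 by apply: z0; rewrite /A in Az; lra.
have b2z : b2 z = 0 by apply: z0; rewrite /A in Az; lra.
move: a1z b1z a2z b2z; rewrite /a1 /b1 /a2 /b2.
by case: (u1 z) => ? ? /= -> ->; case: (u2 z) => ? ? /= -> ->.
Qed.

End Core.

Section Main.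
Context {R : realType}.
Local Notation mu := (@lebesgue_measure R).

Lemma muT : (mu setT = +oo)%E.
Proof.
rewrite -set_itvNyy; apply: eq_trans; first exact: (lebesgue_measure_itv `]-oo, +oo[).
by [].
Qed.

Lemma Linf_ae (F : R -> R) (n : R) :
  ('N[mu]_(+oo%E)[EFin \o F] = n%:E)%E -> {ae mu, forall x, `|F x| <= n}.
Proof.
rewrite unlock /= ifT; last by rewrite muT.
move=> e; have := ess_sup_inf.ess_sup_ge mu (abse \o (EFin \o F)).
rewrite e => h; apply: (aeS h) => x /=.
by rewrite lee_fin.
Qed.

End Main.

Theorem corollary2p4 (R : realType) (q : R -> R[i]) (phi dphi : R -> R) :
  (forall x, cabs (q x) != 0) ->
  Linf (fun x => cabs (q x)) ->
  (forall x, q x = ((cabs (q x))%:C * ((cos (phi x))%:C + (Complex 0 1) * (sin (phi x))%:C))%C) ->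
  loc_abs_cont phi -> ae_deriv phi dphi -> Linf dphi ->
  (forall lam : R, is_eigenvalue_L q lam -> forall c : R,
     ((c - lam)%:E <= 'N[@lebesgue_measure R]_(+oo%E)
        [EFin \o ((fun x => dphi x / 2 - cabs (q x) + c)^\+)%R])%E \/
     ((c + lam)%:E <= 'N[@lebesgue_measure R]_(+oo%E)
        [EFin \o ((fun x => dphi x / 2 + cabs (q x) - c)^\-)%R])%E) /\
  (forall c : R, 0 < c -> (forall x, c + `|dphi x| / 2 <= cabs (q x)) ->
     forall lam : R, - c < lam < c -> ~ is_eigenvalue_L q lam).
Proof.
move=> _ _ hq acphi dphiE _.
have part1 : forall lam : R, is_eigenvalue_L q lam -> forall c : R,
     ((c - lam)%:E <= 'N[@lebesgue_measure R]_(+oo%E)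
        [EFin \o ((fun x => dphi x / 2 - cabs (q x) + c)^\+)%R])%E \/
     ((c + lam)%:E <= 'N[@lebesgue_measure R]_(+oo%E)
        [EFin \o ((fun x => dphi x / 2 + cabs (q x) - c)^\-)%R])%E.
  move=> lam [u1 [u2 [du1 [du2 [H1 H2 Hn Hode]]]]] c.
  set N1 := Lnorm _ _ _; set N2 := Lnorm _ _ _.
  have [h|h1] := leP ((c - lam)%:E) N1; first by left.
  have [h|h2] := leP ((c + lam)%:E) N2; first by right.
  exfalso; apply: Hn.
  have N10 : (0 <= N1)%E by exact: Lnorm_ge0.
  have N20 : (0 <= N2)%E by exact: Lnorm_ge0.
  have f1 : N1 \is a fin_num by rewrite ge0_fin_numE // (lt_trans h1) ?ltry.
  have f2 : N2 \is a fin_num by rewrite ge0_fin_numE // (lt_trans h2) ?ltry.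
  have e1 : N1 = (fine N1)%:E by rewrite fineK.
  have e2 : N2 = (fine N2)%:E by rewrite fineK.
  rewrite e1 lte_fin in h1; rewrite e2 lte_fin in h2.
  have a1 := Linf_ae _ _ e1; have a2 := Linf_ae _ _ e2.
  pose eps := Num.min (c - lam - fine N1) (c + lam - fine N2).
  have eps0 : 0 < eps by rewrite lt_min; apply/andP; split; lra.
  have epsl1 : eps <= c - lam - fine N1 by rewrite ge_min lexx.
  have epsl2 : eps <= c + lam - fine N2 by rewrite ge_min lexx orbT.
  apply: (core _ _ _ _ _ _ _ _ _ eps0 hq acphi dphiE _ H1 H2 Hode).
  apply: (aeS (aeAnd a1 a2)) => x /= [b1 b2].
  rewrite /funrpos /funrneg in b1 b2.
  have m1 : dphi x / 2 - cabs (q x) + c <= Num.max (dphi x / 2 - cabs (q x) + c) 0.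
    by rewrite le_max lexx.
  have m2 : - (dphi x / 2 + cabs (q x) - c) <= Num.max (- (dphi x / 2 + cabs (q x) - c)) 0.
    by rewrite le_max lexx.
  have n1 := ler_norm (Num.max (dphi x / 2 - cabs (q x) + c) 0).
  have n2 := ler_norm (Num.max (- (dphi x / 2 + cabs (q x) - c)) 0).
  rewrite ler_norml; apply/andP; split; lra.
split => // c c0 hc lam /andP[lc cl] hE.
have [h|h] := part1 lam hE c.
  have : ('N[@lebesgue_measure R]_(+oo%E)
        [EFin \o ((fun x => dphi x / 2 - cabs (q x) + c)^\+)%R] = 0)%E.
    rewrite (@eq_Lnorm _ _ _ _ _ _ (cst 0%E)); first exact: Lnorm0.
    move=> x /=; rewrite /funrpos.
    have := hc x; have := ler_norm (dphi x).
    move=> p1 p2; rewrite max_r //; lra.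
  move=> e; rewrite e lee_fin in h; lra.
have : ('N[@lebesgue_measure R]_(+oo%E)
      [EFin \o ((fun x => dphi x / 2 + cabs (q x) - c)^\-)%R] = 0)%E.
  rewrite (@eq_Lnorm _ _ _ _ _ _ (cst 0%E)); first exact: Lnorm0.
  move=> x /=; rewrite /funrneg.
  have := hc x; have := ler_norm (- dphi x); rewrite normrN.
  move=> p1 p2; rewrite max_r //; lra.
move=> e; rewrite e lee_fin in h; lra.
Qed.
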